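(* Let $G$ be a connected non-complete graph. If $\mu_t(G)=n(G)-\operatorname{diam}(G)+1$, then $\gamma_c(G)=\operatorname{diam}(G)-1$.
   Context: All graphs are finite, simple and undirected; $n(G)$ denotes the order of $G$ and $\operatorname{diam}(G)$ its diameter. The connected domination number $\gamma_c(G)$ is the minimum cardinality of a dominating set $D$ of $G$ such that the induced subgraph $G[D]$ is connected. Let $G$ be a connected graph and $X\subseteq V(G)$. Two vertices $x,y\in V(G)$ are $X$-visible if there exists a shortest $x,y$-path in $G$ none of whose internal vertices (i.e., vertices other than $x$ and $y$) belongs to $X$. The set $X$ is a total mutual-visibility set of $G$ if every two vertices of $G$ are $X$-visible (the empty set is allowed). The total mutual-visibility number $\mu_t(G)$ is the maximum cardinality of a total mutual-visibility set of $G$. *)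

(* Defs.v *)
From mathcomp Require Import all_boot.
Set Implicit Arguments. Unset Strict Implicit. Unset Printing Implicit Defensive.

Definition simple_graph (T : finType) (e : rel T) : Prop :=
  symmetric e /\ irreflexive e.

Definition connected_graph (T : finType) (e : rel T) : Prop :=
  forall x y : T, connect e x y.

Definition complete_graph (T : finType) (e : rel T) : Prop :=
  forall x y : T, x != y -> e x y.

Fixpoint ball (T : finType) (e : rel T) (k : nat) (x : T) : {set T} :=
  match k with
  | 0 => [set x]
  | k'.+1 => ball e k' x :|: [set z | [exists w in ball e k' x, e w z]]
  end.

(* graph distance (meaningful when x,y are connected; then it is < #|T|) *)
Definition dist (T : finType) (e : rel T) (x y : T) : nat :=
  find (fun k => y \in ball e k x) (iota 0 #|T|).

Definition diam (T : finType) (e : rel T) : nat :=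
  \max_(x : T) \max_(y : T) dist e x y.

(* p is a shortest x,y-path: the walk x :: p, ending at y, of length dist x y *)
Definition shortest_path (T : finType) (e : rel T) (x y : T) (p : seq T) : bool :=
  [&& path e x p, last x p == y & size p == dist e x y].

(* internal vertices of the path x :: p (all except the two end vertices) *)
Definition internal (T : finType) (x : T) (p : seq T) : seq T :=
  behead (belast x p).

Definition X_visible (T : finType) (e : rel T) (X : {set T}) (x y : T) : Prop :=
  exists p : seq T, shortest_path e x y p /\ all (fun v => v \notin X) (internal x p).

Definition total_mutual_visibility_set (T : finType) (e : rel T) (X : {set T}) : Prop :=
  forall x y : T, X_visible e X x y.

Definition is_mu_t (T : finType) (e : rel T) (m : nat) : Prop :=
  (exists X : {set T}, total_mutual_visibility_set e X /\ #|X| = m) /\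
  (forall X : {set T}, total_mutual_visibility_set e X -> #|X| <= m).

Definition dominating (T : finType) (e : rel T) (D : {set T}) : bool :=
  [forall v, (v \in D) || [exists u in D, e u v]].

Definition induced_connected (T : finType) (e : rel T) (D : {set T}) : Prop :=
  forall x y, x \in D -> y \in D ->
    connect (fun u v => [&& e u v, u \in D & v \in D]) x y.

Definition connected_dominating (T : finType) (e : rel T) (D : {set T}) : Prop :=
  dominating e D /\ induced_connected e D.

Definition is_gamma_c (T : finType) (e : rel T) (m : nat) : Prop :=
  (exists D : {set T}, connected_dominating e D /\ #|D| = m) /\
  (forall D : {set T}, connected_dominating e D -> m <= #|D|).

(* Main.v *)
Require Import Defs.
From mathcomp Require Import all_boot.
From mathcomp Require Import zify.

Lemma ball_path (T : finType) (e : rel T) x p :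
  path e x p -> last x p \in ball e (size p) x.
Proof.
elim/last_ind: p => [|p z IH]; first by rewrite /= inE.
rewrite rcons_path last_rcons size_rcons => /andP[/IH H He] /=.
rewrite inE; apply/orP; right; rewrite inE; apply/existsP; exists (last x p).
by rewrite H He.
Qed.

Lemma dist_ball (T : finType) (e : rel T) x y k :
  y \in ball e k x -> dist e x y <= k.
Proof.
move=> Hy; rewrite /dist.
case: (ltnP k #|T|) => Hk.
  rewrite leqNgt; apply/negP => Hlt.
  have := before_find 0 Hlt.
  by rewrite nth_iota // add0n Hy.
apply: leq_trans (find_size _ _) _; by rewrite size_iota.
Qed.

Lemma dist_path (T : finType) (e : rel T) x p :
  path e x p -> dist e x (last x p) <= size p.
Proof. by move=> Hp; apply: dist_ball; apply: ball_path. Qed.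

Lemma dist_le_card (T : finType) (e : rel T) x y : dist e x y <= #|T|.
Proof. by rewrite /dist; apply: leq_trans (find_size _ _) _; rewrite size_iota. Qed.

Lemma diam_le (T : finType) (e : rel T) m :
  (forall x y, dist e x y <= m) -> diam e <= m.
Proof.
move=> H; apply/bigmax_leqP => x _; apply/bigmax_leqP => y _; exact: H.
Qed.

Lemma dist_le_diam (T : finType) (e : rel T) x y : dist e x y <= diam e.
Proof.
rewrite /diam; apply: leq_trans (leq_bigmax x).
exact: (leq_bigmax (F := fun y => dist e x y) y).
Qed.

Lemma mem_internal_last (T : finType) (x z : T) p :
  z \in p -> z = last x p \/ z \in internal x p.
Proof.
case: p => [//|y s] /=; rewrite /internal /=.
rewrite (lastI y s) mem_rcons in_cons => /orP[/eqP->|H]; [by left|by right].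
Qed.

Lemma path_restrict (T : finType) (e : rel T) (D : {set T}) x p :
  path e x p -> x \in D -> all (fun v => v \in D) p ->
  path (fun u v => [&& e u v, u \in D & v \in D]) x p.
Proof.
elim: p x => //= y s IH x /andP[He Hp] Hx /andP[Hy Hs].
by rewrite He Hx Hy (IH y Hp Hy Hs).
Qed.

Lemma path_in (T : finType) (e : rel T) (D : {set T}) x p :
  path (fun u v => [&& e u v, u \in D & v \in D]) x p -> all (fun v => v \in D) p.
Proof.
elim: p x => //= y s IH x /andP[/and3P[_ _ Hy] Hp]; by rewrite Hy (IH y Hp).
Qed.

Lemma walk_end (T : finType) (e : rel T) x p y y' :
  path e x p -> last x p = y' -> (y' = y \/ e y' y) -> dist e x y <= (size p).+1.
Proof.
move=> Hp Hl [<-|He].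
  by rewrite -Hl; apply: leqW; apply: dist_path.
have Hp2 : path e x (rcons p y) by rewrite rcons_path Hp Hl He.
by have := @dist_path _ _ _ _ Hp2; rewrite last_rcons size_rcons.
Qed.

Theorem corollary2p5 (T : finType) (e : rel T) :
  simple_graph e -> connected_graph e -> ~ complete_graph e ->
  is_mu_t e (#|T| - diam e + 1) ->
  is_gamma_c e (diam e - 1).
Proof.
move=> [Hsym Hirr] Hconn Hnc [[X [HX HXc]] _].
have [a [b [Hab Hnab]]] : exists a b, a != b /\ ~~ e a b.
  case: (boolP [exists a, exists b, (a != b) && ~~ e a b]).
    by move=> /existsP[a /existsP[b /andP[H1 H2]]]; exists a, b.
  move=> H; exfalso; apply: Hnc => x y Hxy.
  apply/negPn/negP => Hn; apply: (negP H); apply/existsP; exists x.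
  by apply/existsP; exists y; rewrite Hxy Hn.
have Hd1 : 1 <= diam e.
  apply: leq_trans (@dist_le_diam _ e a b).
  rewrite lt0n /dist; case Hn: #|T| => [|n].
    have : 0 < #|T| by apply/card_gt0P; exists a.
    by rewrite Hn.
  by rewrite /= in_set1 (eq_sym b a) (negbTE Hab).
have Hdn : diam e <= #|T| by apply: diam_le => x y; apply: dist_le_card.
split.
  exists (~: X); split; last first.
    have := cardsC X; rewrite HXc; lia.
  split.
    have [w Hw] : exists w, w \notin X.
      have [p [/and3P[Hp Hl _] Hint]] := HX a b.
      case: p Hp Hl Hint => [|h [|h' r]] /=.
      - by move=> _ /eqP Eab; move: Hab; rewrite Eab eqxx.
      - by move=> /andP[Eah _] /eqP Ehb; move: Hnab; rewrite -Ehb Eah.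
      - by move=> _ _; rewrite /internal /= => /andP[Hh _]; exists h.
    apply/forallP => v; rewrite inE.
    case Hv: (v \in X) => //=.
    have [q [/and3P[Hq Hl _] Hint]] := HX v w.
    case: q Hq Hl Hint => [|h [|h' r]] /=.
    - by move=> _ /eqP Evw; move: Hw; rewrite -Evw Hv.
    - move=> /andP[Evh _] /eqP Ehw _; apply/existsP; exists h.
      by rewrite inE -Ehw in Hw *; rewrite Hw Hsym.
    - move=> /andP[Evh _] _; rewrite /internal /= => /andP[Hh _].
      by apply/existsP; exists h; rewrite inE Hh Hsym.
  move=> u v Hu Hv.
  have [p [/and3P[Hp Hl _] Hint]] := HX u v.
  apply/connectP; exists p; last by rewrite (eqP Hl).
  apply: path_restrict => //; apply/allP => z Hz.
  case: (@mem_internal_last _ u _ _ Hz) => [->|Hz']; first by rewrite (eqP Hl).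
  by rewrite inE; exact: (allP Hint z Hz').
move=> D [Hdom Hic].
suff H : forall x y, dist e x y <= #|D|.+1.
  have := @diam_le _ _ _ H; lia.
move=> x y.
have [x' Hx' Hxx'] : exists2 x', x' \in D & (x' = x \/ e x x').
  move/forallP: Hdom => /(_ x) /orP [Hx|/existsP[u /andP[Hu Heu]]].
    by exists x; [|left].
  by exists u; [|right; rewrite Hsym].
have [y' Hy' Hyy'] : exists2 y', y' \in D & (y' = y \/ e y' y).
  move/forallP: Hdom => /(_ y) /orP [Hy|/existsP[u /andP[Hu Heu]]].
    by exists y; [|left].
  by exists u; [|right].
have := Hic x' y' Hx' Hy'.
move/connectP => [p Hp Hl].
move: Hl; case: (shortenP Hp) => p' Hp' Hu _ Hl.
have Hs : size (x' :: p') <= #|D|.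
  rewrite -(card_uniqP Hu); apply: subset_leq_card.
  apply/subsetP => z; rewrite in_cons => /orP[/eqP->//|Hz].
  exact: (allP (@path_in _ _ _ _ _ Hp') z Hz).
have Hpe : path e x' p' by apply: sub_path Hp' => u v /and3P[].
case: Hxx' => [Ex|Exx'].
  subst x'.
  have := @walk_end _ _ _ _ _ _ Hpe (esym Hl) Hyy'.
  move: Hs => /= Hs H; lia.
have Hpe2 : path e x (x' :: p') by rewrite /= Exx' Hpe.
have := @walk_end _ _ _ _ _ _ Hpe2 (esym Hl) Hyy'.
move: Hs => /= Hs H; lia.
Qed.
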